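(* Let $\mathfrak{g}$ be a Lie algebra over $\mathbb{F}$ with a symmetric invariant bilinear form $\langle\cdot,\cdot\rangle$, and let $\hat{\mathfrak{g}}=\mathfrak{g}\otimes\mathbb{F}[t,t^{-1}]\oplus\mathbb{F}\mathbf{k}$ be the affine Lie algebra with $\mathbf{k}$ central and $[a\otimes t^m,b\otimes t^n]=[a,b]\otimes t^{m+n}+m\langle a,b\rangle\delta_{m+n,0}\mathbf{k}$. Then $\hat{\mathfrak{g}}$ is an $\mathcal{H}$-module Lie algebra with, for $r\in\mathbb{N}$, $a\in\mathfrak{g}$, $n\in\mathbb{Z}$: $L_{-1}^{(r)}\mathbf{k}=L_1^{(r)}\mathbf{k}=L_0^{(r)}\mathbf{k}=\delta_{r,0}\mathbf{k}$, $L_{-1}^{(r)}(a\otimes t^n)=(-1)^r\binom{n}{r}a\otimes t^{n-r}$, $L_1^{(r)}(a\otimes t^n)=\binom{-n}{r}a\otimes t^{n+r}$, $L_0^{(r)}(a\otimes t^n)=\binom{2n}{r}a\otimes t^n$.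
   Context: $\mathbb{F}$ is an algebraically closed field of odd prime characteristic $p$. $\mathcal{H}$: let $\mathfrak{sl}_2$ over $\mathbb{C}$ have basis $L_{-1},L_0,L_1$ with $[L_1,L_{-1}]=2L_0$, $[L_0,L_{\pm1}]=\mp L_{\pm1}$; put $L_{\pm1}^{(n)}=L_{\pm1}^n/n!$, $L_0^{(n)}=\binom{-2L_0}{n}$ in $U(\mathfrak{sl}_2)$; $U(\mathfrak{sl}_2)_{\mathbb{Z}}$ is the $\mathbb{Z}$-span of the $L_{-1}^{(i)}L_0^{(j)}L_1^{(k)}$, and $\mathcal{H}=\mathbb{F}\otimes_{\mathbb{Z}}U(\mathfrak{sl}_2)_{\mathbb{Z}}$, a Hopf algebra with $\Delta(L_{\pm1}^{(n)})=\sum_iL_{\pm1}^{(n-i)}\otimes L_{\pm1}^{(i)}$, $\Delta(L_0^{(n)})=\sum_iL_0^{(n-i)}\otimes L_0^{(i)}$, $\varepsilon(L_{\pm1}^{(n)})=\varepsilon(L_0^{(n)})=\delta_{n,0}$; it is generated as an algebra by the $L_{\pm1}^{(n)}$. For a bialgebra $B$, a $B$-module Lie algebra is a Lie algebra $\mathfrak{a}$ with a $B$-module structure such that $b[u,v]=\sum[b^{(1)}u,b^{(2)}v]$ for $b\in B$, $u,v\in\mathfrak{a}$, where $\Delta(b)=\sum b^{(1)}\otimes b^{(2)}$. *)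

(* Defs.v *)
From HB Require Import structures.
From mathcomp Require Import all_boot all_order all_algebra.
From mathcomp Require Import finmap.
From mathcomp Require Import monalg.

Set Implicit Arguments.
Unset Strict Implicit.
Unset Printing Implicit Defensive.

Import Order.TTheory GRing.Theory Num.Theory.
Local Open Scope ring_scope.

(* Generalized binomial coefficient binom(z, r) for z : int, r : nat.
   binom(n, r) = 'C(n, r) for n >= 0, and
   binom(-(n+1), r) = (-1)^r 'C(n + r, r). *)
Definition gbinom (z : int) (r : nat) : int :=
  match z with
  | Posz n => ('C(n, r))%:Z
  | Negz n => (-1) ^+ r * ('C(n + r, r))%:Z
  end.

Definition is_lie_bracket (F : fieldType) (g : lmodType F) (br : g -> g -> g)
  : Prop :=
  [/\ (forall (c : F) (a b d : g), br (c *: a + b) d = c *: br a d + br b d),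
      (forall (c : F) (a b d : g), br d (c *: a + b) = c *: br d a + br d b),
      (forall a : g, br a a = 0) &
      (forall a b d : g, br a (br b d) + br b (br d a) + br d (br a b) = 0)].

Definition is_sym_inv_form (F : fieldType) (g : lmodType F)
  (br : g -> g -> g) (form : g -> g -> F) : Prop :=
  [/\ (forall (c : F) (a b d : g), form (c *: a + b) d = c * form a d + form b d),
      (forall a b : g, form a b = form b a) &
      (forall a b d : g, form (br a b) d = form a (br b d))].

(* An element is a pair (x, z): x a finitely supported function int -> g   *)
(* (x@_n is the coefficient of t^n) and z the coefficient of k.            *)
Section Affine.
Variables (F : fieldType) (g : lmodType F).

Definition loopg := {malg g[int]}.
Definition ghat := (loopg * F)%type.

Definition tn (a : g) (n : int) : ghat := (<< a *g n >>, 0).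
Definition kc : ghat := (0, 1).

Definition loop_scale (c : F) (x : loopg) : loopg :=
  \sum_(n <- msupp x) << c *: x@_n *g n >>.

Definition ghat_scale (c : F) (u : ghat) : ghat := (loop_scale c u.1, c * u.2).

Variables (br : g -> g -> g) (form : g -> g -> F).

(* [a t^m + .., b t^n + ..] = [a,b] t^(m+n) + m <a,b> delta_{m+n,0} k ;
   k is central. *)
Definition ghat_br (u v : ghat) : ghat :=
  (\sum_(m <- msupp u.1) \sum_(n <- msupp v.1) << br u.1@_m v.1@_n *g (m + n) >>,
   \sum_(m <- msupp u.1) (m%:~R * form u.1@_m v.1@_(- m))).

End Affine.

(* We characterize an F-algebra H together with the elements               *)
(*   Lm n = L_{-1}^{(n)},  L0 n = L_0^{(n)},  Lp n = L_1^{(n)}              *)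
(* by: the PBW monomials L_{-1}^{(i)} L_0^{(j)} L_1^{(k)} form an F-basis   *)
(* of H (this is the Kostant Z-basis of U(sl_2)_Z tensored with F), and     *)
(* the straightening relations, valid in U(sl_2)_Z, which determine the    *)
(* product of any two basis elements.  Hence any such H is isomorphic to   *)
(* the hyperalgebra of the paper (by an isomorphism respecting Lm, L0, Lp).*)
Section Hyper.
Variables (F : fieldType) (H : algType F) (Lm L0 Lp : nat -> H).

Definition PBW (i j k : nat) : H := Lm i * L0 j * Lp k.

(* binom(-2 L_0 + c, t) expanded in the basis L_0^{(m)} (Vandermonde) *)
Definition L0shift (c : int) (t : nat) : H :=
  \sum_(m < t.+1) (gbinom c (t - m))%:~R *: L0 m.

Record is_hyperalgebra_sl2 : Prop := {
  hyp_Lm0 : Lm 0 = 1;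
  hyp_L00 : L0 0 = 1;
  hyp_Lp0 : Lp 0 = 1;
  hyp_LmLm : forall m n, Lm m * Lm n = ('C(m + n, m))%:R *: Lm (m + n);
  hyp_LpLp : forall m n, Lp m * Lp n = ('C(m + n, m))%:R *: Lp (m + n);
  (* binom(x,m) binom(x,n) = sum_{l=n}^{m+n} C(l,m) C(m,l-n) binom(x,l) *)
  hyp_L0L0 : forall m n,
    L0 m * L0 n = \sum_(n <= l < (m + n).+1) ('C(l, m) * 'C(m, l - n))%:R *: L0 l;
  (* L_0 L_{-1} = L_{-1} (L_0 + 1) *)
  hyp_L0Lm : forall n i,
    L0 n * Lm i = \sum_(m < n.+1) (gbinom (- (2 * i)%:Z) (n - m))%:~R *: (Lm i * L0 m);
  (* L_1 L_0 = (L_0 + 1) L_1 *)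
  hyp_LpL0 : forall k n,
    Lp k * L0 n = \sum_(m < n.+1) (gbinom (- (2 * k)%:Z) (n - m))%:~R *: (L0 m * Lp k);
  hyp_LpLm : forall n i,
    Lp n * Lm i = \sum_(t < (minn n i).+1)
       (-1) ^+ t *: (Lm (i - t) * L0shift ((2 * t)%:Z - n%:Z - i%:Z) t * Lp (n - t));
  hyp_span : forall h : H, exists (N : nat) (c : nat -> nat -> nat -> F),
    h = \sum_(i < N) \sum_(j < N) \sum_(k < N) c i j k *: PBW i j k;
  hyp_indep : forall (N : nat) (c : nat -> nat -> nat -> F),
    \sum_(i < N) \sum_(j < N) \sum_(k < N) c i j k *: PBW i j k = 0 ->
    forall i j k, (i < N)%N -> (j < N)%N -> (k < N)%N -> c i j k = 0
}.

End Hyper.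

(* Main.v *)
Require Import Defs.
From HB Require Import structures.
From mathcomp Require Import all_boot all_order all_algebra.
From mathcomp Require Import finmap monalg.
From mathcomp Require Import ring lra zify.
From Stdlib Require Import ClassicalEpsilon.
Import Order.TTheory GRing.Theory Num.Theory.
Local Open Scope ring_scope.
Set Implicit Arguments.
Unset Strict Implicit.
Unset Printing Implicit Defensive.

Lemma gb0 z : gbinom z 0 = 1.
Proof. by case: z => n; rewrite /gbinom ?bin0 ?expr0 ?mul1r. Qed.

Lemma gb_nat (n r : nat) : gbinom n%:Z r = ('C(n, r))%:Z.
Proof. by []. Qed.

Lemma gb0n r : gbinom 0 r.+1 = 0.
Proof. by rewrite gb_nat bin0n. Qed.

Lemma gbP z r : gbinom (z + 1) r.+1 = gbinom z r.+1 + gbinom z r.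
Proof.
case: z => [n|[|n]].
- have -> : Posz n + 1 = Posz n.+1 by rewrite -addn1.
  by rewrite !gb_nat binS PoszD.
- have -> : Negz 0 + 1 = 0 by rewrite NegzE.
  rewrite gb0n /gbinom add0n !binn exprS; ring.
- have -> : Negz n.+1 + 1 = Negz n by rewrite !NegzE; lia.
  rewrite /gbinom.
  have -> : (n.+1 + r.+1 = (n + r.+1).+1)%N by rewrite addSn.
  have -> : (n.+1 + r = n + r.+1)%N by rewrite addSn addnS.
  rewrite binS PoszD exprS; ring.
Qed.

Lemma gbF z r : (r.+1)%:Z * gbinom z r.+1 = (z - r%:Z) * gbinom z r.
Proof.
case: z => n; rewrite /gbinom.
- rewrite -PoszM mul_bin_left.
  case: (leqP r n) => h.
  + by rewrite PoszM -subzn.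
  + by rewrite bin_small // muln0 mulr0.
- have := mul_bin_diag (n + r.+1) r.
  rewrite addnS /= => h.
  rewrite NegzE exprS.
  have -> : ((r.+1)%:Z * (-1 * (-1) ^+ r * ('C((n + r).+1, r.+1))%:Z)
     = - (-1) ^+ r * ((r.+1 * 'C((n + r).+1, r.+1))%N)%:Z) by rewrite PoszM; ring.
  rewrite -h PoszM; rewrite -[(n + r).+1]addn1 !PoszD; ring.
Qed.

Lemma int_ind2 (P : int -> Prop) : P 0 -> (forall z, P z -> P (z + 1)) ->
  (forall z, P (z + 1) -> P z) -> forall z, P z.
Proof.
move=> P0 Pu Pd z.
have Hp : forall k : nat, P k%:Z.
  elim=> [//|k IH]; have := Pu _ IH; by rewrite -addn1 PoszD.
have Hn : forall k : nat, P (- k%:Z).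
  elim=> [//|k IH]; apply: Pd.
  by have -> : - (k.+1)%:Z + 1 = - k%:Z by rewrite -addn1 PoszD; ring.
case: z => k; first exact: Hp.
by rewrite NegzE; apply: Hn.
Qed.

Lemma pascal_uniq (f g : int -> nat -> int) :
  (forall z, f z 0%N = g z 0%N) ->
  (forall z n, f (z + 1) n.+1 = f z n.+1 + f z n) ->
  (forall z n, g (z + 1) n.+1 = g z n.+1 + g z n) ->
  (forall n, f 0 n = g 0 n) -> forall z n, f z n = g z n.
Proof.
move=> h0 hf hg h00; apply: int_ind2 => //.
- move=> z IH [|n]; first exact: h0.
  by rewrite hf hg !IH.
- move=> z IH; elim=> [|n IHn]; first exact: h0.
  have e1 := hf z n; have e2 := hg z n.
  rewrite IH in e1; rewrite IHn in e1.
  have : f z n.+1 = g z n.+1 by apply: (addIr (g z n)); rewrite -e1 -e2.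
  by [].
Qed.

Lemma bump0' (i : nat) : bump 0 i = i.+1. Proof. by []. Qed.

Lemma vdm y z n :
  \sum_(m < n.+1) gbinom y (n - m) * gbinom z m = gbinom (y + z) n.
Proof.
symmetry.
pose S z n := \sum_(m < n.+1) gbinom y (n - m) * gbinom z m.
apply: (@pascal_uniq (fun z n => gbinom (y + z) n) S) => {z n}.
- by move=> z; rewrite /S big_ord1 !gb0 mulr1.
- by move=> z n; rewrite addrA gbP.
- move=> z n; rewrite /S.
  rewrite big_ord_recl [in RHS]big_ord_recl !gb0 subn0.
  under eq_bigr => i _ do rewrite lift0 subSS gbP mulrDr.
  under [X in _ = _ + X + _]eq_bigr => i _ do rewrite lift0 subSS.
  by rewrite big_split /= addrA.
- move=> n; rewrite /S addr0 big_ord_recl gb0 mulr1 subn0.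
  rewrite big1 ?addr0 // => i _.
  by rewrite lift0 gb0n mulr0.
Qed.

Lemma vdm' y z n :
  \sum_(m < n.+1) gbinom y m * gbinom z (n - m) = gbinom (y + z) n.
Proof.
rewrite -vdm [RHS](reindex_inj rev_ord_inj) /=.
apply: eq_bigr => i _; rewrite subSS subKn //.
by have := ltn_ord i; rewrite ltnS.
Qed.

Lemma gb_prod (n : int) (a b : nat) :
  gbinom (n - b%:Z) a * gbinom n b = ('C(a + b, a))%:Z * gbinom n (a + b).
Proof.
elim: a => [|a IH]; first by rewrite gb0 add0n bin0 mul1r.
apply: (@mulfI _ (a.+1)%:Z) => //.
have L : (a.+1)%:Z * (gbinom (n - b%:Z) a.+1 * gbinom n b)
   = (n - b%:Z - a%:Z) * (('C(a + b, a))%:Z * gbinom n (a + b)).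
  by rewrite mulrA gbF -mulrA IH.
rewrite L addSn [RHS]mulrA -PoszM -mul_bin_diag /= PoszM (mulrC _ (Posz (binomial _ _))) -mulrA gbF PoszD.
ring.
Qed.

Lemma gb_CI (y : int) (k : nat) :
  (y - k%:Z) * gbinom y k = y * gbinom (y - 1) k.
Proof.
case: k => [|k]; first by rewrite !gb0 subr0.
have e := gbP (y - 1) k; rewrite subrK in e.
rewrite e; have f := gbF (y - 1) k.
rewrite -[k.+1]addn1 PoszD in f *.
rewrite mulrDr.
have -> : (y - (k%:Z + 1)) * gbinom (y - 1) k = (k%:Z + 1) * gbinom (y - 1) (k + 1)%N.
  by rewrite f; ring.
ring.
Qed.

Lemma gb_pred (r : nat) : gbinom (r%:Z - 1) r = (r == 0%N)%:R.
Proof.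
case: r => [|r]; first by rewrite gb0.
have -> : (r.+1)%:Z - 1 = r%:Z by rewrite -addn1 PoszD addrK.
by rewrite gb_nat bin_small.
Qed.

Lemma sum_widen (V : nmodType) (n n' : nat) (F : nat -> V) : (n <= n')%N ->
  (forall i, (n <= i < n')%N -> F i = 0) ->
  \sum_(i < n') F i = \sum_(i < n) F i.
Proof.
move=> le h; rewrite (big_ord_widen _ _ le) [RHS]big_mkcond /=.
apply: eq_bigr => i _; case: ifP => // /negbT; rewrite -leqNgt => hi.
by rewrite h // hi ltn_ord.
Qed.

Lemma gb_L0L0 (x : int) (m j : nat) :
  gbinom x m * gbinom x j =
  \sum_(j <= l < (m + j).+1) ('C(l, m) * 'C(m, l - j))%:Z * gbinom x l.
Proof.
rewrite (_ : \sum_(j <= l < (m + j).+1) _ = \sum_(0 + j <= l < (m + j).+1)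
   (('C(l, m) * 'C(m, l - j))%:Z * gbinom x l)); last by rewrite add0n.
rewrite big_addn -addSn addnK big_mkord.
rewrite (reindex_inj rev_ord_inj) /=.
have step : forall u : 'I_m.+1,
   (('C((m.+1 - u.+1) + j, m) * 'C(m, (m.+1 - u.+1) + j - j))%:Z
      * gbinom x ((m.+1 - u.+1) + j))
   = gbinom x m * (if (u <= j)%N then ('C(m, u))%:Z * gbinom (x - m%:Z) (j - u)
                   else 0).
  move=> u; have hu := ltn_ord u; rewrite ltnS in hu.
  rewrite subSS addnK bin_sub //.
  case: leqP => hj.
  + have -> : (m - u + j = (j - u) + m)%N by lia.
    rewrite PoszM -{1}(@bin_sub (j - u + m) m) ?leq_addl // addnK.
    rewrite mulrAC -gb_prod; ring.
  + by rewrite bin_small ?mul0n ?mul0r ?mulr0 //; lia.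
rewrite (eq_bigr _ (fun u _ => step u)) -mulr_sumr; congr (_ * _).
have := vdm' m%:Z (x - m%:Z) j; rewrite [m%:Z + _]addrC subrK => <-.
rewrite -(@sum_widen _ _ (m + j).+1 (fun u => if (u <= j)%N then ('C(m, u))%:Z * gbinom (x - m%:Z) (j - u) else 0)); last 2 first.
- by rewrite ltnS leq_addr.
- by move=> i /andP[h _]; case: ifP => // _; rewrite bin_small ?mul0r.
rewrite (eq_bigr (fun u : 'I_j.+1 => if (u <= j)%N then gbinom m u * gbinom (x - m%:Z) (j - u) else 0)); last first.
  by move=> i _; rewrite -ltnS ltn_ord.
rewrite -(@sum_widen _ _ (m + j).+1 (fun u => if (u <= j)%N then gbinom m u * gbinom (x - m%:Z) (j - u) else 0)); last 2 first.
- by rewrite ltnS leq_addl.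
- by move=> i /andP[h _]; case: ifP => //; rewrite leqNgt h.
by apply: eq_bigr => i _.
Qed.

Definition gbi (z k : int) : int := if k is Posz r then gbinom z r else 0.

Lemma gbi_nat z (r : nat) : gbi z r%:Z = gbinom z r. Proof. by []. Qed.
Lemma gbi0 z : gbi z 0 = 1. Proof. exact: gb0. Qed.
Lemma gbi_neg z k : k < 0 -> gbi z k = 0.
Proof. by case: k. Qed.

Lemma gbiP z k : gbi (z + 1) k = gbi z k + gbi z (k - 1).
Proof.
case: k => [[|r]|n].
- by rewrite !gbi0 gbi_neg ?addr0.
- have -> : (r.+1)%:Z - 1 = r%:Z by rewrite -addn1 PoszD addrK.
  exact: gbP.
- by rewrite !gbi_neg ?addr0 // NegzE; lia.
Qed.

Lemma gbiF z k : k * gbi z k = (z - k + 1) * gbi z (k - 1).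
Proof.
case: k => [[|r]|n].
- by rewrite mul0r gbi_neg ?mulr0.
- have -> : (r.+1)%:Z - 1 = r%:Z by rewrite -addn1 PoszD addrK.
  rewrite !gbi_nat gbF -addn1 PoszD; congr (_ * _); ring.
- by rewrite !gbi_neg ?mulr0 // NegzE; lia.
Qed.

Lemma lin_comb1 (R : comRingType) (L M a b c : R) :
  a = b -> L - M = c * (a - b) -> L = M.
Proof. by move=> -> /eqP; rewrite subrr mulr0 subr_eq0 => /eqP. Qed.

Section Kost.
Variables (x i : int).

Definition KT (r t : int) :=
  gbi (x + r - t) (i - t) * gbi (2 * x + r - i) t * gbi (- x) (r - t).
Definition KA (r t : int) :=
  gbi (x + r + 1 - t) (i - t) * ((r + 1 - t) * gbi (- x) (r + 1 - t))
  * gbi (2 * x + r - i) t.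
Definition KB (r t : int) :=
  gbi (x + r - t) (i - t - 1) * (2 * x + 2 * r + 1 - i - t)
  * gbi (2 * x + r - i) t * gbi (- x) (r - t).

Lemma K_ptA r t : (i - x - r) * KT r t = KA r t + KB r t.
Proof.
rewrite /KT /KA /KB.
have h1 := gbiP (x + r - t) (i - t).
have h2 := gbiF (x + r - t) (i - t).
have h3 := gbiF (- x) (r + 1 - t).
have -> : x + r + 1 - t = x + r - t + 1 by ring.
have e : r + 1 - t - 1 = r - t by ring.
rewrite e in h3; rewrite h1 h3.
apply: (lin_comb1 h2 (c := gbi (2 * x + r - i) t * gbi (- x) (r - t))).
ring.
Qed.

Lemma K_ptB r s : (r + 1) * KT (r + 1) (s + 1) = KA r (s + 1) + KB r s.
Proof.
rewrite /KT /KA /KB.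
have -> : x + (r + 1) - (s + 1) = x + r - s by ring.
have -> : x + r + 1 - (s + 1) = x + r - s by ring.
have -> : i - (s + 1) = i - s - 1 by ring.
have -> : (r + 1) - (s + 1) = r - s by ring.
have -> : 2 * x + (r + 1) - i = (2 * x + r - i) + 1 by ring.
have h1 := gbiP (2 * x + r - i) (s + 1).
have h2 := gbiF (2 * x + r - i) (s + 1).
have e2 : s + 1 - 1 = s by ring.
rewrite e2 in h1 h2.
rewrite h1.
apply: (lin_comb1 h2 (c := gbi (x + r - s) (i - s - 1) * gbi (- x) (r - s))).
ring.
Qed.

Lemma K_ptC r : (r + 1) * KT (r + 1) 0 = KA r 0.
Proof.
rewrite /KT /KA !subr0 !gbi0 addrA; ring.
Qed.

Lemma K_ptD r : KA r (r + 1) = 0.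
Proof. by rewrite /KA subrr mul0r mulr0 mul0r. Qed.

Lemma kost_gbi (r : nat) :
  gbi x i * gbi (i - x) r%:Z = \sum_(t < r.+1) KT r%:Z t%:Z.
Proof.
elim: r => [|r IH].
  by rewrite big_ord1 /KT !subr0 !gbi0 !mulr1.
apply: (@mulfI _ (r%:Z + 1)); first by rewrite -PoszD addn1.
have -> : (r.+1)%:Z = r%:Z + 1 by rewrite -addn1 PoszD.
have R : (r%:Z + 1) * \sum_(t < r.+2) KT (r%:Z + 1) t%:Z
    = \sum_(t < r.+1) KA r%:Z t%:Z + \sum_(t < r.+1) KB r%:Z t%:Z.
  rewrite mulr_sumr big_ord_recl.
  have -> : (r%:Z + 1) * KT (r%:Z + 1) (nat_of_ord (@ord0 r.+1))%:Z = KA r%:Z 0.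
    exact: K_ptC.
  rewrite (eq_bigr (fun t : 'I_r.+1 => KA r%:Z (t%:Z + 1) + KB r%:Z t%:Z)); last first.
    by move=> t _; rewrite lift0 -[t.+1]addn1 PoszD K_ptB.
  rewrite big_split /= addrA; congr (_ + _).
  have e : \sum_(t < r.+1) KA r%:Z (t%:Z + 1) + KA r%:Z 0 = \sum_(t < r.+2) KA r%:Z t%:Z.
    rewrite [RHS]big_ord_recl addrC; congr (_ + _).
    by apply: eq_bigr => t _; rewrite lift0 -[t.+1]addn1 PoszD.
  rewrite addrC e big_ord_recr /=.
  by rewrite (_ : (r.+1)%:Z = r%:Z + 1) ?K_ptD ?addr0 // -[r.+1]addn1 PoszD.
rewrite R mulrA (mulrC _ (gbi x i)) -mulrA.
have -> : (r%:Z + 1) * gbi (i - x) (r%:Z + 1) = (i - x - r%:Z) * gbi (i - x) r%:Z.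
  by rewrite gbiF; congr (_ * _); [ring | congr gbi; ring].
rewrite mulrA (mulrC (gbi x i)) -mulrA IH mulr_sumr -big_split /=.
by apply: eq_bigr => t _; rewrite K_ptA.
Qed.
End Kost.

Lemma kost_nat (x : int) (n i : nat) :
  gbinom x i * gbinom (i%:Z - x) n =
  \sum_(t < (minn n i).+1)
     gbinom (x + (n - t)%N%:Z) (i - t) * gbinom (2 * x + n%:Z - i%:Z) t
     * gbinom (- x) (n - t).
Proof.
have := kost_gbi x i%:Z n; rewrite !gbi_nat => ->.
rewrite (@sum_widen _ (minn n i).+1 n.+1 (fun t : nat => KT x i%:Z n%:Z t%:Z)); last 2 first.
- by rewrite ltnS geq_minl.
- move=> t /andP[h1 h2]; rewrite /KT (@gbi_neg _ (i%:Z - t%:Z)) ?mul0r //.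
  move: h1 h2; rewrite ltnS /minn; case: ifP => h h1 h2; lia.
apply: eq_bigr => t _.
have ht := ltn_ord t; rewrite ltnS leq_min in ht; case/andP: ht => hn hi.
rewrite /KT (subzn hi) (subzn hn) !gbi_nat; congr (_ * _ * _).
by rewrite -addrA (subzn hn).
Qed.

Lemma sum_any (T : eqType) (V : nmodType) (s1 s2 : seq T) (H : T -> V) :
  uniq s1 -> uniq s2 ->
  (forall x, x \notin s1 -> H x = 0) -> (forall x, x \notin s2 -> H x = 0) ->
  \sum_(x <- s1) H x = \sum_(x <- s2) H x.
Proof.
move=> u1 u2 h1 h2.
have -> : \sum_(x <- s1) H x = \sum_(x <- s1 | x \in s2) H x.
  rewrite [RHS]big_mkcond; apply: eq_bigr => x _.
  by case: ifP => // /negbT /h2.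
have -> : \sum_(x <- s2) H x = \sum_(x <- s2 | x \in s1) H x.
  rewrite [RHS]big_mkcond; apply: eq_bigr => x _.
  by case: ifP => // /negbT /h1.
rewrite -[LHS]big_filter -[RHS]big_filter; apply: perm_big; apply: uniq_perm; rewrite ?filter_uniq //.
by move=> x; rewrite !mem_filter andbC.
Qed.

Lemma sum_pred1 (T : eqType) (V : nmodType) (s : seq T) (F : T -> V) a :
  uniq s -> \sum_(x <- s) F x *+ (x == a) = if a \in s then F a else 0.
Proof.
move=> us.
have -> : \sum_(x <- s) F x *+ (x == a) = \sum_(x <- s | x == a) F x.
  rewrite [RHS]big_mkcond; apply: eq_bigr => x _.
  by case: (x == a); rewrite ?mulr1n ?mulr0n.
rewrite -big_filter.
case: ifP => ha; first by rewrite filter_pred1_uniq // big_seq1.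
rewrite big_seq big1 // => x; rewrite mem_filter => /andP[/eqP -> h].
by rewrite h in ha.
Qed.

Section Ops.
Variables (F : fieldType) (g : lmodType F).
Local Notation ghat := (ghat g).
Local Notation loopg := (loopg g).

Lemma ghat_eq (u v : ghat) :
  (forall p, u.1@_p = v.1@_p) -> u.2 = v.2 -> u = v.
Proof. by case: u v => [x a] [y b] /= h ->; congr pair; apply/malgP. Qed.

Lemma coef_shift (x : loopg) (G : int -> g -> g) (d p : int) :
  (forall n, G n 0 = 0) ->
  (\sum_(n <- msupp x) << G n x@_n *g (n + d) >>)@_p = G (p - d) x@_(p - d).
Proof.
move=> G0; rewrite (big_morph (mcoeff p) (mcoeffD p) (mcoeff0 p)).
under eq_bigr => n _ do rewrite mcoeffU.
have e : forall n, (n + d == p) = (n == p - d).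
  by move=> n; apply/eqP/eqP => h; [rewrite -h addrK | rewrite h subrK].
under eq_bigr => n _ do rewrite e.
rewrite sum_pred1 //; case: ifP => // /negbT h.
by rewrite (mcoeff_outdom h) G0.
Qed.

Lemma coef_loop_scale (c : F) (x : loopg) p :
  (loop_scale c x)@_p = c *: x@_p.
Proof.
rewrite /loop_scale (big_morph (mcoeff p) (mcoeffD p) (mcoeff0 p)).
under eq_bigr => n _ do rewrite mcoeffU.
rewrite sum_pred1 //; case: ifP => // /negbT h.
by rewrite (mcoeff_outdom h) scaler0.
Qed.

Definition Top (phi : int -> F) (d : int) (e : F) (u : ghat) : ghat :=
  (\sum_(n <- msupp u.1) << phi n *: u.1@_n *g (n + d) >>, e * u.2).

Lemma Top1 phi d e u p : (Top phi d e u).1@_p = phi (p - d) *: u.1@_(p - d).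
Proof. by apply: (@coef_shift _ (fun n a => phi n *: a)) => n; rewrite scaler0. Qed.

Lemma Top2 phi d e u : (Top phi d e u).2 = e * u.2.
Proof. by []. Qed.

Lemma scale1 (c : F) (u : ghat) p : (ghat_scale c u).1@_p = c *: u.1@_p.
Proof. exact: coef_loop_scale. Qed.

Lemma scale2 (c : F) (u : ghat) : (ghat_scale c u).2 = c * u.2.
Proof. by []. Qed.

Opaque Top ghat_scale.

Lemma add1 (u v : ghat) p : (u + v).1@_p = u.1@_p + v.1@_p.
Proof. exact: mcoeffD. Qed.

Lemma add2 (u v : ghat) : (u + v).2 = u.2 + v.2.
Proof. by []. Qed.

Lemma zero1 p : (0 : ghat).1@_p = 0.
Proof. exact: mcoeff0. Qed.

Lemma zero2 : (0 : ghat).2 = 0.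
Proof. by []. Qed.

Lemma sum1 (I : Type) (r : seq I) (P : pred I) (U : I -> ghat) p :
  (\sum_(i <- r | P i) U i).1@_p = \sum_(i <- r | P i) (U i).1@_p.
Proof.
by apply: (big_morph (fun u : ghat => u.1@_p)) => [u v|]; rewrite ?add1 ?zero1.
Qed.

Lemma sum2 (I : Type) (r : seq I) (P : pred I) (U : I -> ghat) :
  (\sum_(i <- r | P i) U i).2 = \sum_(i <- r | P i) (U i).2.
Proof.
by apply: (big_morph (fun u : ghat => u.2)) => [u v|]; rewrite ?add2 ?zero2.
Qed.

Lemma TopD phi d e u v : Top phi d e (u + v) = Top phi d e u + Top phi d e v.
Proof.
apply: ghat_eq => [p|]; rewrite ?add1 ?Top1 ?add1 ?scalerDr //.
by rewrite add2 !Top2 add2 mulrDr.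
Qed.

Lemma Top0 phi d e : Top phi d e 0 = 0.
Proof.
apply: ghat_eq => [p|]; rewrite ?Top1 ?zero1 ?scaler0 //.
by rewrite Top2 zero2 mulr0.
Qed.

Lemma Top_sum phi d e (I : Type) (r : seq I) (P : pred I) (U : I -> ghat) :
  Top phi d e (\sum_(i <- r | P i) U i) = \sum_(i <- r | P i) Top phi d e (U i).
Proof. by apply: big_morph; [exact: TopD | exact: Top0]. Qed.

Lemma Top_scale phi d e c u : Top phi d e (ghat_scale c u) = ghat_scale c (Top phi d e u).
Proof.
apply: ghat_eq => [p|]; first by rewrite Top1 !scale1 Top1 !scalerA mulrC.
by rewrite Top2 !scale2 Top2 mulrCA.
Qed.

Lemma scaleD (c : F) (u v : ghat) : ghat_scale c (u + v) = ghat_scale c u + ghat_scale c v.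
Proof.
apply: ghat_eq => [p|]; rewrite ?add1 ?scale1 ?add1 ?scalerDr //.
by rewrite add2 !scale2 add2 mulrDr.
Qed.

Lemma scale0 (c : F) : ghat_scale c (0 : ghat) = 0.
Proof. by apply: ghat_eq => [p|]; rewrite ?scale1 ?zero1 ?scaler0 // scale2 zero2 mulr0. Qed.

Lemma scale_sum (c : F) (I : Type) (r : seq I) (P : pred I) (U : I -> ghat) :
  ghat_scale c (\sum_(i <- r | P i) U i) = \sum_(i <- r | P i) ghat_scale c (U i).
Proof. by apply: big_morph; [exact: scaleD | exact: scale0]. Qed.

Lemma scaleA (a b : F) (u : ghat) : ghat_scale a (ghat_scale b u) = ghat_scale (a * b) u.
Proof.
apply: ghat_eq => [p|]; rewrite ?scale1 ?scale1 ?scalerA //.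
by rewrite !scale2 mulrA.
Qed.

Lemma gscale1 (u : ghat) : ghat_scale 1 u = u.
Proof. by apply: ghat_eq => [p|]; rewrite ?scale1 ?scale1r // scale2 mul1r. Qed.

Lemma scaleDl (a b : F) (u : ghat) : ghat_scale (a + b) u = ghat_scale a u + ghat_scale b u.
Proof.
apply: ghat_eq => [p|]; rewrite ?add1 ?scale1 ?scale1 ?scalerDl //.
by rewrite add2 !scale2 mulrDl.
Qed.

Lemma scale0l (u : ghat) : ghat_scale 0 u = 0.
Proof. by apply: ghat_eq => [p|]; rewrite ?scale1 ?zero1 ?scale0r // scale2 zero2 mul0r. Qed.

End Ops.

Lemma xx0 (V : zmodType) (x : V) : x = x + x -> x = 0.
Proof. by move=> h; apply: (addrI x); rewrite addr0 -h. Qed.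

Section Br.
Variables (F : fieldType) (g : lmodType F).
Local Notation ghat := (ghat g).
Local Notation loopg := (loopg g).
Variables (br : g -> g -> g) (form : g -> g -> F).
Hypothesis lie_g : is_lie_bracket br.
Hypothesis form_g : is_sym_inv_form br form.

Lemma br0l b : br 0 b = 0.
Proof.
case: lie_g => h _ _ _; apply: xx0; have e := h 1 0 0 b.
by rewrite !scale1r addr0 in e.
Qed.
Lemma br0r b : br b 0 = 0.
Proof.
case: lie_g => _ h _ _; apply: xx0; have e := h 1 0 0 b.
by rewrite !scale1r addr0 in e.
Qed.
Lemma brZl c a b : br (c *: a) b = c *: br a b.
Proof. by case: lie_g => h _ _ _; have := h c a 0 b; rewrite addr0 br0l addr0. Qed.
Lemma brZr c a b : br b (c *: a) = c *: br b a.
Proof. by case: lie_g => _ h _ _; have := h c a 0 b; rewrite addr0 br0r addr0. Qed.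

Lemma form0l b : form 0 b = 0.
Proof.
case: form_g => h _ _; apply: xx0; have e := h 1 0 0 b.
by rewrite scale1r addr0 mul1r in e.
Qed.
Lemma formZl c a b : form (c *: a) b = c * form a b.
Proof. by case: form_g => h _ _; have := h c a 0 b; rewrite addr0 form0l addr0. Qed.
Lemma formZr c a b : form b (c *: a) = c * form b a.
Proof. by case: form_g => _ h _; rewrite h formZl h. Qed.

Lemma br1 (u v : ghat) p :
  (ghat_br br form u v).1@_p = \sum_(m <- msupp u.1) br u.1@_m v.1@_(p - m).
Proof.
have -> : (ghat_br br form u v).1 = \sum_(m <- msupp u.1) \sum_(n <- msupp v.1)
   << br u.1@_m v.1@_n *g (m + n) >> by [].
rewrite (big_morph (mcoeff p) (mcoeffD p) (mcoeff0 p)); apply: eq_bigr => m _.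
under eq_bigr => n _ do rewrite (addrC m).
by rewrite (@coef_shift _ _ v.1 (fun _ a => br u.1@_m a)) // => n; rewrite br0r.
Qed.

Lemma br2 (u v : ghat) :
  (ghat_br br form u v).2 = \sum_(m <- msupp u.1) m%:~R * form u.1@_m v.1@_(- m).
Proof. by []. Qed.

Lemma supp_shift (V : nmodType) phi d e (u : ghat) (G : int -> g -> V) :
  (forall m, G m 0 = 0) ->
  \sum_(m <- msupp (Top phi d e u).1) G m (Top phi d e u).1@_m
  = \sum_(m <- msupp u.1) G (m + d) (phi m *: u.1@_m).
Proof.
move=> G0.
rewrite (@sum_any _ _ _ [seq m + d | m <- msupp u.1]); first last.
- move=> x hx; rewrite Top1 mcoeff_outdom ?scaler0 ?G0 //.
  apply: contra hx => h; apply/mapP; exists (x - d) => //; by rewrite subrK.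
- by move=> x hx; rewrite mcoeff_outdom ?G0.
- by rewrite map_inj_uniq ?fset_uniq //; exact: addIr.
- exact: fset_uniq.
by rewrite big_map; apply: eq_bigr => m _; rewrite Top1 addrK.
Qed.

Section Leib.
Variables (phi : nat -> int -> F) (d : nat -> int) (e : nat -> F).
Hypothesis Hd : forall r r1, (r1 <= r)%N -> d r1 + d (r - r1)%N = d r.
Hypothesis Hphi : forall r x y,
  phi r (x + y) = \sum_(r1 < r.+1) phi r1 x * phi (r - r1)%N y.
Hypothesis Hz : forall r m,
  \sum_(r1 < r.+1) (m + d r1)%:~R * (phi r1 m * phi (r - r1)%N (- m - d r))
  = e r * m%:~R.
Hypothesis He : forall r, d r != 0 -> e r = 0.

Local Notation A r := (Top (phi r) (d r) (e r)).

Lemma leibniz r (u v : ghat) :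
  A r (ghat_br br form u v)
  = \sum_(r1 < r.+1) ghat_br br form (A r1 u) (A (r - r1)%N v).
Proof.
apply: ghat_eq => [p|].
- rewrite Top1 br1 sum1.
  under [RHS]eq_bigr => r1 _.
    rewrite br1 (@supp_shift _ _ _ _ u (fun m a => br a (A (r - r1)%N v).1@_(p - m)));
      last by move=> m; rewrite br0l.
    under eq_bigr => m _.
      rewrite Top1 brZl brZr scalerA.
      have -> : p - (m + d r1) - d (r - r1)%N = p - d r - m.
        by rewrite -(Hd (ltnSE (ltn_ord r1))); ring.
      over.
    over.
  rewrite exchange_big /= scaler_sumr; apply: eq_bigr => m _.
  rewrite -scaler_suml; congr (_ *: _).
  by rewrite -Hphi; congr phi; ring.
- rewrite Top2 br2 sum2.
  under [RHS]eq_bigr => r1 _.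
    rewrite br2 (@supp_shift _ _ _ _ u (fun m a => m%:~R * form a (A (r - r1)%N v).1@_(- m)));
      last by move=> m; rewrite form0l mulr0.
    under eq_bigr => m _.
      rewrite Top1 formZl formZr.
      have -> : - (m + d r1) - d (r - r1)%N = - m - d r.
        by rewrite -(Hd (ltnSE (ltn_ord r1))); ring.
      rewrite mulrA mulrA -mulrA mulrC -!mulrA.
      over.
    over.
  rewrite exchange_big /=.
  rewrite [RHS](eq_bigr (fun m => (e r * m%:~R) * form u.1@_m v.1@_(- m - d r))); last first.
    move=> m _; rewrite -Hz mulr_suml; apply: eq_bigr => i _; ring.
  case: (eqVneq (d r) 0) => [-> | /He ->].
    by rewrite mulr_sumr; apply: eq_bigr => m _; rewrite subr0 mulrA.
  by rewrite mul0r big1 // => m _; rewrite !mul0r.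
Qed.

End Leib.

Lemma leib3 (A B C : nat -> ghat -> ghat) :
  (forall r x y, A r (x + y) = A r x + A r y) -> (forall r, A r 0 = 0) ->
  (forall r x y, B r (x + y) = B r x + B r y) -> (forall r, B r 0 = 0) ->
  (forall r u v, A r (ghat_br br form u v)
     = \sum_(r1 < r.+1) ghat_br br form (A r1 u) (A (r - r1)%N v)) ->
  (forall r u v, B r (ghat_br br form u v)
     = \sum_(r1 < r.+1) ghat_br br form (B r1 u) (B (r - r1)%N v)) ->
  (forall r u v, C r (ghat_br br form u v)
     = \sum_(r1 < r.+1) ghat_br br form (C r1 u) (C (r - r1)%N v)) ->
  forall i j k u v, A i (B j (C k (ghat_br br form u v))) =
  \sum_(i1 < i.+1) \sum_(j1 < j.+1) \sum_(k1 < k.+1)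
     ghat_br br form (A i1 (B j1 (C k1 u)))
       (A (i - i1)%N (B (j - j1)%N (C (k - k1)%N v))).
Proof.
move=> AD A0 BD B0 hA hB hC i j k u v.
have sA : forall r (I : Type) (s : seq I) (P : pred I) (w : I -> ghat),
    A r (\sum_(x <- s | P x) w x) = \sum_(x <- s | P x) A r (w x).
  by move=> r I s P w; apply: big_morph.
have sB : forall r (I : Type) (s : seq I) (P : pred I) (w : I -> ghat),
    B r (\sum_(x <- s | P x) w x) = \sum_(x <- s | P x) B r (w x).
  by move=> r I s P w; apply: big_morph.
rewrite hC sB sA.
under eq_bigr => k1 _ do rewrite hB sA.
under eq_bigr => k1 _ do under eq_bigr => j1 _ do rewrite hA.
under eq_bigr => k1 _ do rewrite exchange_big.
rewrite exchange_big; apply: eq_bigr => i1 _.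
by rewrite exchange_big.
Qed.
End Br.

Section Alg.
Variables (F : fieldType) (g : lmodType F).
Local Notation ghat := (ghat g).

Lemma Top_comp phi d e psi d' e' (w : ghat) :
  Top phi d e (Top psi d' e' w)
  = Top (fun n => phi (n + d') * psi n) (d + d') (e * e') w.
Proof.
apply: ghat_eq => [p|]; last by rewrite !Top2 mulrA.
rewrite !Top1 scalerA.
have -> : p - d - d' = p - (d + d') by ring.
by have -> : p - (d + d') + d' = p - d by ring.
Qed.

Definition good (phi : int -> F) (d : int) (e : F) :=
  e = phi 0 /\ (d != 0 -> phi 0 = 0).

Lemma good_comp phi d e psi d' e' : good phi d e -> good psi d' e' ->
  good (fun n => phi (n + d') * psi n) (d + d') (e * e').
Proof.
move=> [e1 h1] [e2 h2]; rewrite /good add0r.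
case: (eqVneq d' 0) => [-> | /[dup] nz /h2 z2].
  by rewrite addr0 e1 e2; split => // /h1 ->; rewrite mul0r.
by rewrite e2 z2 !mulr0.
Qed.

Lemma good_lin (I : Type) (s : seq I) (c : I -> F) phi d e :
  (forall t, good (phi t) d (e t)) ->
  good (fun n => \sum_(t <- s) c t * phi t n) d (\sum_(t <- s) c t * e t).
Proof.
move=> h; split.
  by apply: eq_bigr => t _; case: (h t) => ->.
by move=> nz; apply: big1 => t _; case: (h t) => _ ->; rewrite ?mulr0.
Qed.

Lemma good_d phi d d' e : good phi d e -> d = d' -> good phi d' e.
Proof. by move=> h <-. Qed.

Lemma Top_eq phi d e phi' e' (w : ghat) :
  good phi d e -> good phi' d e' -> phi =1 phi' -> Top phi d e w = Top phi' d e' w.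
Proof.
move=> [-> _] [-> _] h.
by apply: ghat_eq => [p|]; rewrite ?Top1 ?Top2 h.
Qed.

Lemma Top_dext phi d d' e (w : ghat) : d = d' -> Top phi d e w = Top phi d' e w.
Proof. by move=> ->. Qed.

Lemma Top_lin (I : Type) (s : seq I) (c : I -> F) phi d e (w : ghat) :
  \sum_(t <- s) ghat_scale (c t) (Top (phi t) d (e t) w)
  = Top (fun n => \sum_(t <- s) c t * phi t n) d (\sum_(t <- s) c t * e t) w.
Proof.
apply: ghat_eq => [p|].
  rewrite sum1 Top1 scaler_suml; apply: eq_bigr => t _.
  by rewrite scale1 Top1 scalerA.
rewrite sum2 Top2 mulr_suml; apply: eq_bigr => t _.
by rewrite scale2 Top2 mulrA.
Qed.

Lemma Top_scale_l c phi d e (w : ghat) :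
  ghat_scale c (Top phi d e w) = Top (fun n => c * phi n) d (c * e) w.
Proof.
apply: ghat_eq => [p|]; first by rewrite scale1 !Top1 scalerA.
by rewrite scale2 !Top2 mulrA.
Qed.

Lemma Top_id phi d e (w : ghat) : (forall n, phi n = 1) -> d = 0 -> e = 1 ->
  Top phi d e w = w.
Proof.
move=> h -> ->; apply: ghat_eq => [p|]; first by rewrite Top1 subr0 h scale1r.
by rewrite Top2 mul1r.
Qed.

Definition phim (r : nat) (n : int) : F := ((-1) ^+ r * gbinom n r)%:~R.
Definition phip (r : nat) (n : int) : F := (gbinom (- n) r)%:~R.
Definition phi0 (r : nat) (n : int) : F := (gbinom (2%:Z * n) r)%:~R.
Definition er (r : nat) : F := (r == 0%N)%:R.

Definition Tm r : ghat -> ghat := Top (phim r) (- r%:Z) (er r).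
Definition Tp r : ghat -> ghat := Top (phip r) r%:Z (er r).
Definition T0 r : ghat -> ghat := Top (phi0 r) 0 (er r).

Lemma gb0r (r : nat) : gbinom 0 r = (r == 0%N)%:R.
Proof. by rewrite gb_nat bin0n; case: r. Qed.

Lemma er_int (r : nat) : ((r == 0%N)%:R : int)%:~R = er r.
Proof. by case: r. Qed.

Lemma goodm r : good (phim r) (- r%:Z) (er r).
Proof.
rewrite /good /phim gb0r; case: r => [|r]; first by rewrite expr0 mul1r.
by split => //; rewrite mulr0.
Qed.
Lemma goodp r : good (phip r) r%:Z (er r).
Proof. by rewrite /good /phip oppr0 gb0r; case: r. Qed.
Lemma good0 r : good (phi0 r) 0 (er r).
Proof. by rewrite /good /phi0 mulr0 gb0r; case: r. Qed.

Lemma Tm0 (w : ghat) : Tm 0 w = w.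
Proof. by apply: Top_id => // n; rewrite /phim gb0 expr0 mulr1. Qed.
Lemma Tp0 (w : ghat) : Tp 0 w = w.
Proof. by apply: Top_id => // n; rewrite /phip gb0. Qed.
Lemma T00 (w : ghat) : T0 0 w = w.
Proof. by apply: Top_id => // n; rewrite /phi0 gb0. Qed.

End Alg.

Section Ids.
Variables (F : fieldType) (g : lmodType F).
Local Notation ghat := (ghat g).

Lemma Top_eq' (phi : int -> F) d e phi' d' e' (w : ghat) :
  good phi d e -> good phi' d' e' -> d = d' -> phi =1 phi' ->
  Top phi d e w = Top phi' d' e' w.
Proof. by move=> g1 g2 ed h; subst d'; exact: Top_eq. Qed.

Lemma good_scale (c : F) phi d e : good phi d e -> good (fun n => c * phi n) d (c * e).
Proof. by move=> [-> h]; split => // /h ->; rewrite mulr0. Qed.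

Lemma RmRm a b (w : ghat) :
  Tm a (Tm b w) = ghat_scale ('C(a + b, a))%:R (Tm (a + b) w).
Proof.
rewrite /Tm Top_comp Top_scale_l.
apply: Top_eq'.
- exact: good_comp (goodm _ a) (goodm _ b).
- exact: good_scale (goodm _ (a + b)).
- by rewrite PoszD opprD.
- move=> n; rewrite /phim -[_%:R]/((_%:Z)%:~R) -!intrM; congr intmul.
  apply: (lin_comb1 (gb_prod n a b) (c := (-1) ^+ a * (-1) ^+ b)).
  rewrite exprD; ring.
Qed.

Lemma RpRp a b (w : ghat) :
  Tp a (Tp b w) = ghat_scale ('C(a + b, a))%:R (Tp (a + b) w).
Proof.
rewrite /Tp Top_comp Top_scale_l.
apply: Top_eq'.
- exact: good_comp (goodp _ a) (goodp _ b).
- exact: good_scale (goodp _ (a + b)).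
- by rewrite PoszD.
- move=> n; rewrite /phip -[_%:R]/((_%:Z)%:~R) -!intrM; congr intmul.
  by rewrite opprD gb_prod.
Qed.

Lemma R0R0 m j (w : ghat) :
  T0 m (T0 j w) = \sum_(j <= l < (m + j).+1)
     ghat_scale (('C(l, m) * 'C(m, l - j))%:R) (T0 l w).
Proof.
rewrite /T0 Top_comp Top_lin.
apply: Top_eq'.
- exact: good_comp (good0 _ m) (good0 _ j).
- by apply: good_lin => l; exact: good0.
- by rewrite addr0.
- move=> n; rewrite /phi0 addr0 -intrM.
  have := congr1 (fun z : int => z%:~R : F) (gb_L0L0 (2%:Z * n) m j).
  rewrite /= => ->; rewrite rmorph_sum; apply: eq_bigr => l _.
  by rewrite rmorphM.
Qed.

Lemma R0Rm r i (w : ghat) :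
  T0 r (Tm i w) = \sum_(m < r.+1)
     ghat_scale (gbinom (- (2 * i)%:Z) (r - m))%:~R (Tm i (T0 m w)).
Proof.
rewrite /T0 /Tm Top_comp.
under eq_bigr => m _ do rewrite Top_comp.
rewrite Top_lin.
apply: Top_eq'.
- exact: good_comp (good0 _ r) (goodm _ i).
- by apply: good_lin => m; exact: good_comp (goodm _ i) (good0 _ m).
- by rewrite add0r addr0.
- move=> n; rewrite /phi0 /phim addr0 -intrM.
  under eq_bigr => m _ do rewrite -!intrM.
  rewrite -rmorph_sum; congr intmul.
  rewrite (eq_bigr (fun m : 'I_r.+1 => ((-1) ^+ i * gbinom n i) *
     (gbinom (- (2 * i)%:Z) (r - m) * gbinom (2%:Z * n) m))); last first.
    by move=> m _; ring.
  rewrite -mulr_sumr vdm mulrC; congr (_ * _); congr gbinom.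
  rewrite PoszM; ring.
Qed.

Lemma RpR0 k n (w : ghat) :
  Tp k (T0 n w) = \sum_(m < n.+1)
     ghat_scale (gbinom (- (2 * k)%:Z) (n - m))%:~R (T0 m (Tp k w)).
Proof.
rewrite /T0 /Tp Top_comp.
under eq_bigr => m _ do rewrite Top_comp.
rewrite Top_lin.
apply: Top_eq'.
- exact: good_comp (goodp _ k) (good0 _ n).
- by apply: good_lin => m; exact: good_comp (good0 _ m) (goodp _ k).
- by rewrite add0r addr0.
- move=> x; rewrite /phi0 /phip addr0 -intrM.
  under eq_bigr => m _ do rewrite -!intrM.
  rewrite -rmorph_sum; congr intmul.
  rewrite (eq_bigr (fun m : 'I_n.+1 => gbinom (- x) k *
     (gbinom (- (2 * k)%:Z) (n - m) * gbinom (2%:Z * (x + k%:Z)) m))); last first.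
    by move=> m _; ring.
  rewrite -mulr_sumr vdm; congr (_ * _); congr gbinom.
  rewrite PoszM; ring.
Qed.

Lemma RpRm n i (w : ghat) :
  Tp n (Tm i w) = \sum_(t < (minn n i).+1) ghat_scale ((-1) ^+ t)
    (Tm (i - t) (\sum_(m < t.+1)
       ghat_scale (gbinom ((2 * t)%:Z - n%:Z - i%:Z) (t - m))%:~R
         (T0 m (Tp (n - t) w)))).
Proof.
have hd : forall t : 'I_(minn n i).+1,
    - ((i - t)%N%:Z) + (0 + (n - t)%N%:Z) = n%:Z - i%:Z.
  move=> t; have ht := ltn_ord t; rewrite ltnS leq_min in ht.
  case/andP: ht => hn hi; rewrite -!subzn //; ring.
rewrite /Tp /Tm /T0 Top_comp.
under eq_bigr => t _.
  under eq_bigr => m _ do rewrite Top_comp.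
  rewrite Top_lin Top_comp (Top_dext _ _ _ (hd t)).
  over.
rewrite Top_lin.
apply: Top_eq'.
- exact: good_comp (goodp _ n) (goodm _ i).
- apply: good_lin => t; apply: good_d (hd t).
  apply: good_comp (goodm _ _) _.
  by apply: good_lin => m; exact: good_comp (good0 _ m) (goodp _ _).
- by [].
move=> x; rewrite /phi0 /phip /phim -intrM.
under eq_bigr => t _.
  under eq_bigr => m _ do rewrite -!intrM.
  rewrite -rmorph_sum -intrM -(rmorph_sign (intr : int -> F)) -intrM.
  over.
rewrite -rmorph_sum; congr intmul.
rewrite (eq_bigr (fun t : 'I_(minn n i).+1 => (-1) ^+ i *
   (gbinom (x + (n - t)%N%:Z) (i - t) * gbinom (2 * x + n%:Z - i%:Z) t
     * gbinom (- x) (n - t)))); last first.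
  move=> t _; have ht := ltn_ord t; rewrite ltnS leq_min in ht.
  case/andP: ht => hn hi.
  rewrite (eq_bigr (fun m : 'I_t.+1 => gbinom (- x) (n - t) *
     (gbinom ((2 * t)%N%:Z - n%:Z - i%:Z) (t - m)
       * gbinom (2%:Z * (x + (n - t)%N%:Z)) m))); last by move=> m _; ring.
  rewrite -mulr_sumr vdm add0r.
  have -> : (2 * t)%N%:Z - n%:Z - i%:Z + 2%:Z * (x + (n - t)%N%:Z)
     = 2 * x + n%:Z - i%:Z by rewrite PoszM -subzn //; ring.
  have -> : ((-1) ^+ i : int) = (-1) ^+ t * (-1) ^+ (i - t) by rewrite -exprD subnKC.
  ring.
rewrite -mulr_sumr -kost_nat.
have -> : - (x - i%:Z) = i%:Z - x by ring.
ring.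
Qed.

End Ids.

Section LeibInst.
Variables (F : fieldType) (g : lmodType F).
Local Notation ghat := (ghat g).
Variables (br : g -> g -> g) (form : g -> g -> F).
Hypothesis lie_g : is_lie_bracket br.
Hypothesis form_g : is_sym_inv_form br form.

Lemma sign_split (r r1 : nat) : (r1 <= r)%N ->
  ((-1) ^+ r : int) = (-1) ^+ r1 * (-1) ^+ (r - r1).
Proof. by move=> h; rewrite -exprD subnKC. Qed.

Lemma leibm r (u v : ghat) :
  Tm r (ghat_br br form u v)
  = \sum_(r1 < r.+1) ghat_br br form (Tm r1 u) (Tm (r - r1)%N v).
Proof.
apply: (leibniz lie_g form_g (phi := @phim F) (d := fun r => - r%:Z) (e := @er F)).
- by move=> {}r r1 h /=; rewrite -opprD -PoszD subnKC.
- move=> {}r x y; rewrite /phim.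
  under eq_bigr => r1 _ do rewrite -intrM.
  rewrite -rmorph_sum; congr intmul.
  rewrite (eq_bigr (fun r1 : 'I_r.+1 => (-1) ^+ r * (gbinom x r1 * gbinom y (r - r1)))).
    by rewrite -mulr_sumr vdm'.
  move=> r1 _; rewrite (sign_split (ltnSE (ltn_ord r1))); ring.
- move=> {}r m; rewrite /phim -er_int -intrM.
  under eq_bigr => r1 _ do rewrite -!intrM.
  rewrite -rmorph_sum; congr intmul.
  rewrite (eq_bigr (fun r1 : 'I_r.+1 => (-1) ^+ r * m *
     (gbinom (m - 1) r1 * gbinom (r%:Z - m) (r - r1)))).
    rewrite -mulr_sumr vdm'.
    have -> : m - 1 + (r%:Z - m) = r%:Z - 1 by ring.
    by rewrite gb_pred; case: r => [|r] /=; rewrite ?expr0 ?mulr0 ?mul1r ?mulr1 ?mul0r.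
  move=> r1 _; rewrite (sign_split (ltnSE (ltn_ord r1))).
  have -> : - m - - r%:Z = r%:Z - m by ring.
  apply: (lin_comb1 (gb_CI m r1) (c := (-1) ^+ r1 * (-1) ^+ (r - r1) * gbinom (r%:Z - m) (r - r1))).
  ring.
- by move=> {}r; case: r.
Qed.

Lemma leibp r (u v : ghat) :
  Tp r (ghat_br br form u v)
  = \sum_(r1 < r.+1) ghat_br br form (Tp r1 u) (Tp (r - r1)%N v).
Proof.
apply: (leibniz lie_g form_g (phi := @phip F) (d := fun r => r%:Z) (e := @er F)).
- by move=> {}r r1 h /=; rewrite -PoszD subnKC.
- move=> {}r x y; rewrite /phip.
  under eq_bigr => r1 _ do rewrite -intrM.
  rewrite -rmorph_sum; congr intmul.
  by rewrite vdm' opprD.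
- move=> {}r m; rewrite /phip -er_int -intrM.
  under eq_bigr => r1 _ do rewrite -!intrM.
  rewrite -rmorph_sum; congr intmul.
  rewrite (eq_bigr (fun r1 : 'I_r.+1 => m *
     (gbinom (- m - 1) r1 * gbinom (m + r%:Z) (r - r1)))).
    rewrite -mulr_sumr vdm'.
    have -> : - m - 1 + (m + r%:Z) = r%:Z - 1 by ring.
    by rewrite gb_pred mulrC.
  move=> r1 _.
  have -> : - (- m - r%:Z) = m + r%:Z by ring.
  have e := gb_CI (- m) r1.
  apply: (lin_comb1 e (c := - gbinom (m + r%:Z) (r - r1))).
  ring.
- by move=> {}r; case: r.
Qed.

Lemma leib0 r (u v : ghat) :
  T0 r (ghat_br br form u v)
  = \sum_(r1 < r.+1) ghat_br br form (T0 r1 u) (T0 (r - r1)%N v).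
Proof.
apply: (leibniz lie_g form_g (phi := @phi0 F) (d := fun r => 0) (e := @er F)).
- by move=> {}r r1 h /=; rewrite addr0.
- move=> {}r x y; rewrite /phi0.
  under eq_bigr => r1 _ do rewrite -intrM.
  rewrite -rmorph_sum; congr intmul.
  by rewrite vdm' mulrDr.
- move=> {}r m; rewrite /phi0 -er_int -intrM.
  under eq_bigr => r1 _ do rewrite -!intrM.
  rewrite -rmorph_sum; congr intmul.
  rewrite (eq_bigr (fun r1 : 'I_r.+1 => m *
     (gbinom (2%:Z * m) r1 * gbinom (2%:Z * (- m)) (r - r1)))).
    rewrite -mulr_sumr vdm' -mulrDr addrN mulr0 gb0r mulrC.
    by [].
  by move=> r1 _; rewrite addr0 subr0; ring.
- by move=> {}r; rewrite eqxx.
Qed.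

Lemma leibPBW i j k (u v : ghat) :
  Tm i (T0 j (Tp k (ghat_br br form u v))) =
  \sum_(i1 < i.+1) \sum_(j1 < j.+1) \sum_(k1 < k.+1)
     ghat_br br form (Tm i1 (T0 j1 (Tp k1 u)))
       (Tm (i - i1)%N (T0 (j - j1)%N (Tp (k - k1)%N v))).
Proof.
apply: (leib3 (A := @Tm F g) (B := @T0 F g) (C := @Tp F g)).
- by move=> r x y; exact: TopD.
- by move=> r; exact: Top0.
- by move=> r x y; exact: TopD.
- by move=> r; exact: Top0.
- exact: leibm.
- exact: leib0.
- exact: leibp.
Qed.

End LeibInst.

Notation S3 N f := (\sum_(i < N) \sum_(j < N) \sum_(k < N) f i j k).

Definition pad (V : nmodType) (N : nat) (c : nat -> nat -> nat -> V) i j k :=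
  if [&& (i < N)%N, (j < N)%N & (k < N)%N] then c i j k else 0.

Lemma S3_pad (V : nmodType) (W : Type) (N L : nat) (c : nat -> nat -> nat -> W)
  (z : W) (X : W -> nat -> nat -> nat -> V) :
  (N <= L)%N -> (forall i j k, X z i j k = 0) ->
  S3 N (fun i j k => X (c i j k) i j k)
  = S3 L (fun i j k => X (if [&& (i < N)%N, (j < N)%N & (k < N)%N] then c i j k else z) i j k).
Proof.
move=> le hz.
pose Y a i j k := X (if [&& (i < N)%N, (j < N)%N & (k < N)%N] then a else z) i j k.
rewrite [RHS](@sum_widen _ N L (fun i => \sum_(j < L) \sum_(k < L) Y (c i j k) i j k)); last 2 first.
- exact: le.
- move=> i /andP[h _]; apply: big1 => j _; apply: big1 => k _.
  by rewrite /Y ltnNge h /= hz.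
apply: eq_bigr => i _.
rewrite [RHS](@sum_widen _ N L (fun j => \sum_(k < L) Y (c i j k) i j k)); last 2 first.
- exact: le.
- move=> j /andP[h _]; apply: big1 => k _.
  by rewrite /Y ltn_ord ltnNge h /= hz.
apply: eq_bigr => j _.
rewrite [RHS](@sum_widen _ N L (fun k => Y (c i j k) i j k)); last 2 first.
- exact: le.
- by move=> k /andP[h _]; rewrite /Y !ltn_ord ltnNge h /= hz.
by apply: eq_bigr => k _; rewrite /Y !ltn_ord.
Qed.

Lemma sum_ord_one (V : nmodType) (M i : nat) (G : nat -> V) : (i < M)%N ->
  (forall i', (i' < M)%N -> i' != i -> G i' = 0) ->
  \sum_(i' < M) G i' = G i.
Proof.
move=> hi h; rewrite (bigD1 (Ordinal hi)) //= big1 ?addr0 // => i' hne.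
apply: h => //; apply: contra hne => /eqP e; apply/eqP; exact: val_inj.
Qed.

Lemma sum3_one (V : nmodType) (M i j k : nat) (f : nat -> nat -> nat -> V) :
  (i < M)%N -> (j < M)%N -> (k < M)%N ->
  S3 M (fun i' j' k' => if [&& i' == i, j' == j & k' == k] then f i' j' k' else 0)
  = f i j k.
Proof.
move=> hi hj hk.
pose G i' j' k' := if [&& i' == i, j' == j & k' == k] then f i' j' k' else 0.
rewrite (@sum_ord_one _ M i (fun i' => \sum_(j' < M) \sum_(k' < M) G i' j' k')) //; last first.
  move=> i' _ /negbTE ne; apply: big1 => j' _; apply: big1 => k' _.
  by rewrite /G ne.
rewrite (@sum_ord_one _ M j (fun j' => \sum_(k' < M) G i j' k')) //; last first.
  move=> j' _ /negbTE ne; apply: big1 => k' _.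
  by rewrite /G eqxx ne.
rewrite (@sum_ord_one _ M k (fun k' => G i j k')) //; first by rewrite /G !eqxx.
by move=> k' _ /negbTE ne; rewrite /G !eqxx ne.
Qed.

Section Act.
Variables (F : fieldType) (H : algType F) (Lm L0 Lp : nat -> H).
Hypothesis hypH : is_hyperalgebra_sl2 Lm L0 Lp.
Variables (g : lmodType F).
Local Notation ghat := (ghat g).
Local Notation PBW := (PBW Lm L0 Lp).

Definition TT i j k (u : ghat) := Tm i (T0 j (Tp k u)).

Lemma span_sig (h : H) : {N : nat & {c : nat -> nat -> nat -> F |
  h = S3 N (fun i j k => c i j k *: PBW i j k)}}.
Proof.
have := hyp_span hypH h.
move/constructive_indefinite_description => [N].
move/constructive_indefinite_description => [c hc].
by exists N, c.
Qed.

Definition Nh h := projT1 (span_sig h).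
Definition ch h := proj1_sig (projT2 (span_sig h)).
Lemma ch_spec h : h = S3 (Nh h) (fun i j k => ch h i j k *: PBW i j k).
Proof. exact: (proj2_sig (projT2 (span_sig h))). Qed.

Definition act (h : H) (u : ghat) : ghat :=
  S3 (Nh h) (fun i j k => ghat_scale (ch h i j k) (TT i j k u)).

Lemma act_rep (M : nat) (d : nat -> nat -> nat -> F) (h : H) u :
  h = S3 M (fun i j k => d i j k *: PBW i j k) ->
  act h u = S3 M (fun i j k => ghat_scale (d i j k) (TT i j k u)).
Proof.
move=> hd; set N := Nh h; set c := ch h; set L := maxn N M.
have hN : (N <= L)%N by rewrite leq_maxl.
have hM : (M <= L)%N by rewrite leq_maxr.
pose c' i j k := if [&& (i < N)%N, (j < N)%N & (k < N)%N] then c i j k else 0.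
pose d' i j k := if [&& (i < M)%N, (j < M)%N & (k < M)%N] then d i j k else 0.
have hc : h = S3 L (fun i j k => c' i j k *: PBW i j k).
  rewrite {1}(ch_spec h) -/N -/c.
  by apply: (@S3_pad _ _ N L c 0 (fun a i j k => a *: PBW i j k) hN) => *; rewrite scale0r.
have hd' : h = S3 L (fun i j k => d' i j k *: PBW i j k).
  rewrite {1}hd.
  by apply: (@S3_pad _ _ M L d 0 (fun a i j k => a *: PBW i j k) hM) => *; rewrite scale0r.
have eq0 : S3 L (fun i j k => (c' i j k - d' i j k) *: PBW i j k) = 0.
  have -> : S3 L (fun i j k => (c' i j k - d' i j k) *: PBW i j k)
     = S3 L (fun i j k => c' i j k *: PBW i j k) - S3 L (fun i j k => d' i j k *: PBW i j k).
    rewrite -sumrB; apply: eq_bigr => i _; rewrite -sumrB; apply: eq_bigr => j _.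
    by rewrite -sumrB; apply: eq_bigr => k _; rewrite scalerBl.
  by rewrite -hc -hd' subrr.
have ecd : forall i j k, (i < L)%N -> (j < L)%N -> (k < L)%N -> c' i j k = d' i j k.
  move=> i j k hi hj hk; apply/eqP; rewrite -subr_eq0; apply/eqP.
  exact: (@hyp_indep _ _ _ _ _ hypH L (fun i j k => c' i j k - d' i j k) eq0 i j k hi hj hk).
rewrite /act -/N -/c.
rewrite (@S3_pad _ _ N L c 0 (fun a i j k => ghat_scale a (TT i j k u)) hN); last first.
  by move=> *; rewrite scale0l.
rewrite (@S3_pad _ _ M L d 0 (fun a i j k => ghat_scale a (TT i j k u)) hM); last first.
  by move=> *; rewrite scale0l.
apply: eq_bigr => i _; apply: eq_bigr => j _; apply: eq_bigr => k _.
by have := ecd i j k (ltn_ord i) (ltn_ord j) (ltn_ord k); rewrite /c' /d' => ->.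
Qed.

Lemma S3D (V : nmodType) N (f f' : 'I_N -> 'I_N -> 'I_N -> V) :
  S3 N f + S3 N f' = S3 N (fun i j k => f i j k + f' i j k).
Proof.
rewrite -big_split; apply: eq_bigr => i _; rewrite -big_split.
by apply: eq_bigr => j _; rewrite -big_split.
Qed.

Lemma S3Z N a (f : 'I_N -> 'I_N -> 'I_N -> H) :
  a *: S3 N f = S3 N (fun i j k => a *: f i j k).
Proof.
rewrite scaler_sumr; apply: eq_bigr => i _; rewrite scaler_sumr.
by apply: eq_bigr => j _; rewrite scaler_sumr.
Qed.

Lemma S3G N a (f : 'I_N -> 'I_N -> 'I_N -> ghat) :
  ghat_scale a (S3 N f) = S3 N (fun i j k => ghat_scale a (f i j k)).
Proof.
rewrite scale_sum; apply: eq_bigr => i _; rewrite scale_sum.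
by apply: eq_bigr => j _; rewrite scale_sum.
Qed.

Lemma act_spec_pad h L u : (Nh h <= L)%N ->
  act h u = S3 L (fun i j k => ghat_scale (pad (Nh h) (ch h) i j k) (TT i j k u)).
Proof.
move=> le; rewrite /act.
by apply: (@S3_pad _ _ (Nh h) L (ch h) 0 (fun a i j k => ghat_scale a (TT i j k u)) le) => *;
  rewrite scale0l.
Qed.

Lemma h_spec_pad h L : (Nh h <= L)%N ->
  h = S3 L (fun i j k => pad (Nh h) (ch h) i j k *: PBW i j k).
Proof.
move=> le; rewrite {1}(ch_spec h).
by apply: (@S3_pad _ _ (Nh h) L (ch h) 0 (fun a i j k => a *: PBW i j k) le) => *;
  rewrite scale0r.
Qed.

Lemma act0 u : act 0 u = 0.
Proof.
rewrite (@act_rep 0 (fun _ _ _ => 0)); first by rewrite big_ord0.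
by rewrite big_ord0.
Qed.

Lemma act_lin a h1 h2 u : act (a *: h1 + h2) u = ghat_scale a (act h1 u) + act h2 u.
Proof.
set L := maxn (Nh h1) (Nh h2).
have l1 : (Nh h1 <= L)%N by rewrite leq_maxl.
have l2 : (Nh h2 <= L)%N by rewrite leq_maxr.
rewrite (@act_rep L (fun i j k => a * pad (Nh h1) (ch h1) i j k + pad (Nh h2) (ch h2) i j k)).
  rewrite (act_spec_pad u l1) (act_spec_pad u l2) S3G S3D.
  apply: eq_bigr => i _; apply: eq_bigr => j _; apply: eq_bigr => k _.
  by rewrite scaleDl scaleA.
rewrite {1}(h_spec_pad l1) {1}(h_spec_pad l2) S3Z S3D.
apply: eq_bigr => i _; apply: eq_bigr => j _; apply: eq_bigr => k _.
by rewrite scalerA scalerDl.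
Qed.

Lemma act_add h1 h2 u : act (h1 + h2) u = act h1 u + act h2 u.
Proof. by rewrite -[h1]scale1r act_lin gscale1 scale1r. Qed.

Lemma act_scale a h u : act (a *: h) u = ghat_scale a (act h u).
Proof. by rewrite -[a *: h]addr0 act_lin act0 addr0. Qed.

Lemma act_sum (I : Type) (r : seq I) (P : pred I) (f : I -> H) u :
  act (\sum_(x <- r | P x) f x) u = \sum_(x <- r | P x) act (f x) u.
Proof.
by apply: (big_morph (fun h => act h u)) => [h1 h2|]; rewrite ?act_add ?act0.
Qed.

Lemma act_PBW i j k u : act (PBW i j k) u = TT i j k u.
Proof.
set M := (maxn i (maxn j k)).+1.
have hi : (i < M)%N by rewrite ltnS leq_maxl.
have hj : (j < M)%N by rewrite ltnS (leq_trans (leq_maxl j k)) // leq_maxr.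
have hk : (k < M)%N by rewrite ltnS (leq_trans (leq_maxr j k)) // leq_maxr.
rewrite (@act_rep M (fun i' j' k' => ([&& i' == i, j' == j & k' == k])%:R)).
  rewrite -[RHS](@sum3_one _ M i j k (fun i j k => TT i j k u)) //.
  apply: eq_bigr => i' _; apply: eq_bigr => j' _; apply: eq_bigr => k' _.
  by case: ifP => _; rewrite ?gscale1 ?scale0l.
rewrite -[LHS](@sum3_one _ M i j k (fun i j k => PBW i j k)) //.
apply: eq_bigr => i' _; apply: eq_bigr => j' _; apply: eq_bigr => k' _.
by case: ifP => _; rewrite ?scale1r ?scale0r.
Qed.

Lemma TTD i j k (u v : ghat) : TT i j k (u + v) = TT i j k u + TT i j k v.
Proof. by rewrite /TT /Tp /T0 /Tm !TopD. Qed.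

Lemma TTZ i j k c (u : ghat) : TT i j k (ghat_scale c u) = ghat_scale c (TT i j k u).
Proof. by rewrite /TT /Tp /T0 /Tm !Top_scale. Qed.

Lemma act_uD h (u v : ghat) : act h (u + v) = act h u + act h v.
Proof.
rewrite /act S3D; apply: eq_bigr => i _; apply: eq_bigr => j _; apply: eq_bigr => k _.
by rewrite TTD scaleD.
Qed.

Lemma act_u0 h : act h 0 = 0.
Proof.
rewrite /act; apply: big1 => i _; apply: big1 => j _; apply: big1 => k _.
by rewrite /TT /Tp /T0 /Tm !Top0 scale0.
Qed.

Lemma act_uZ h c (u : ghat) : act h (ghat_scale c u) = ghat_scale c (act h u).
Proof.
rewrite /act S3G; apply: eq_bigr => i _; apply: eq_bigr => j _; apply: eq_bigr => k _.
by rewrite TTZ !scaleA mulrC.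
Qed.

Lemma mult_gen (x : H) (O : ghat -> ghat) :
  (forall a b, O (a + b) = O a + O b) -> O 0 = 0 ->
  (forall c a, O (ghat_scale c a) = ghat_scale c (O a)) ->
  (forall i j k u, act (x * PBW i j k) u = O (TT i j k u)) ->
  forall y u, act (x * y) u = O (act y u).
Proof.
move=> OD O0 OZ h y u.
have Os : forall (I : Type) (r : seq I) (P : pred I) (f : I -> ghat),
    O (\sum_(z <- r | P z) f z) = \sum_(z <- r | P z) O (f z).
  by move=> I r P f; apply: big_morph.
have -> : x * y = S3 (Nh y) (fun i j k => ch y i j k *: (x * PBW i j k)).
  rewrite {1}(ch_spec y) mulr_sumr; apply: eq_bigr => i _.
  rewrite mulr_sumr; apply: eq_bigr => j _.
  rewrite mulr_sumr; apply: eq_bigr => k _.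
  by rewrite -scalerAr.
transitivity (O (S3 (Nh y) (fun i j k => ghat_scale (ch y i j k) (TT i j k u)))); last by [].
rewrite act_sum Os; apply: eq_bigr => i _.
rewrite act_sum Os; apply: eq_bigr => j _.
rewrite act_sum Os; apply: eq_bigr => k _.
by rewrite act_scale h OZ.
Qed.

Lemma PBW0 j k : L0 j * Lp k = PBW 0 j k.
Proof. by rewrite /PBW (hyp_Lm0 hypH) mul1r. Qed.

Lemma PBWp k : Lp k = PBW 0 0 k.
Proof. by rewrite -PBW0 (hyp_L00 hypH) mul1r. Qed.

Lemma act_Lm r y u : act (Lm r * y) u = Tm r (act y u).
Proof.
apply: mult_gen => //.
- by move=> a b; exact: TopD.
- exact: Top0.
- by move=> c a; exact: Top_scale.
move=> i j k {}u; rewrite /PBW !mulrA (hyp_LmLm hypH) -!scalerAl.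
by rewrite act_scale act_PBW /TT RmRm.
Qed.

Lemma act_L0 r y u : act (L0 r * y) u = T0 r (act y u).
Proof.
apply: mult_gen => //.
- by move=> a b; exact: TopD.
- exact: Top0.
- by move=> c a; exact: Top_scale.
move=> i j k {}u; rewrite /PBW !mulrA (hyp_L0Lm hypH) !mulr_suml act_sum.
rewrite /TT R0Rm; apply: eq_bigr => m _.
rewrite -!scalerAl act_scale -!mulrA act_Lm; congr (ghat_scale _ (Tm i _)).
rewrite mulrA (hyp_L0L0 hypH) mulr_suml act_sum R0R0; apply: eq_bigr => l _.
by rewrite -scalerAl act_scale PBW0 act_PBW /TT Tm0.
Qed.

Lemma act_Y a j k u : act (Lp a * (L0 j * Lp k)) u = Tp a (T0 j (Tp k u)).
Proof.
rewrite mulrA (hyp_LpL0 hypH) mulr_suml act_sum RpR0; apply: eq_bigr => m _.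
rewrite -scalerAl act_scale -mulrA act_L0 (hyp_LpLp hypH) act_scale PBWp act_PBW.
by rewrite /TT Tm0 T00 RpRp.
Qed.

Lemma act_Lp r y u : act (Lp r * y) u = Tp r (act y u).
Proof.
apply: mult_gen => //.
- by move=> a b; exact: TopD.
- exact: Top0.
- by move=> c a; exact: Top_scale.
move=> i j k {}u; rewrite /PBW !mulrA (hyp_LpLm hypH) !mulr_suml act_sum.
rewrite /TT RpRm; apply: eq_bigr => t _.
rewrite -!scalerAl act_scale -!mulrA act_Lm; congr (ghat_scale _ (Tm _ _)).
rewrite /L0shift mulr_suml act_sum; apply: eq_bigr => m _.
by rewrite -scalerAl act_scale act_L0 act_Y.
Qed.

Lemma act_mul h1 h2 u : act (h1 * h2) u = act h1 (act h2 u).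
Proof.
have -> : h1 * h2 = S3 (Nh h1) (fun i j k => ch h1 i j k *: (PBW i j k * h2)).
  rewrite {1}(ch_spec h1) mulr_suml; apply: eq_bigr => i _.
  rewrite mulr_suml; apply: eq_bigr => j _.
  rewrite mulr_suml; apply: eq_bigr => k _.
  by rewrite -scalerAl.
transitivity (S3 (Nh h1) (fun i j k => ghat_scale (ch h1 i j k) (TT i j k (act h2 u)))); last by [].
rewrite act_sum; apply: eq_bigr => i _.
rewrite act_sum; apply: eq_bigr => j _.
rewrite act_sum; apply: eq_bigr => k _.
by rewrite act_scale /PBW -!mulrA act_Lm act_L0 act_Lp.
Qed.

Lemma act1 u : act 1 u = u.
Proof.
have -> : (1 : H) = PBW 0 0 0.
  by rewrite /PBW (hyp_Lm0 hypH) (hyp_L00 hypH) (hyp_Lp0 hypH) !mul1r.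
by rewrite act_PBW /TT Tp0 T00 Tm0.
Qed.

End Act.

Lemma Top_tn (F : fieldType) (g : lmodType F) phi d e (a : g) n :
  Top phi d e (tn a n) = tn (phi n *: a) (n + d).
Proof.
apply: ghat_eq => [p|]; last by rewrite Top2 /= mulr0.
rewrite Top1.
have -> : forall (b : g) m, (tn b m).1 = << b *g m >> by [].
rewrite !mcoeffU.
case: (eqVneq n (p - d)) => [->|ne]; first by rewrite subrK !eqxx.
have -> : (n + d == p) = false by apply/negbTE; apply: contra ne => /eqP <-; rewrite addrK.
by rewrite scaler0.
Qed.

Lemma Top_kc (F : fieldType) (g : lmodType F) phi d (r : nat) :
  Top phi d (r == 0%N)%:R (kc g) = if r == 0%N then kc g else 0.
Proof.
apply: ghat_eq => [p|].
  rewrite Top1.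
  have -> : (kc g).1 = 0 by [].
  by rewrite mcoeff0 scaler0; case: (r == 0%N) => //; rewrite zero1.
rewrite Top2; case: (r == 0%N) => /=; first by rewrite mul1r.
by rewrite mul0r.
Qed.

Unset Implicit Arguments.
Set Strict Implicit.
Set Printing Implicit Defensive.

Theorem lemma5p1
  (F : closedFieldType) (p : nat)
  (p_prime : prime p) (p_odd : p != 2%N) (charF : p \in [pchar F])
  (H : algType F) (Lm L0 Lp : nat -> H)
  (hypH : is_hyperalgebra_sl2 Lm L0 Lp)
  (g : lmodType F) (br : g -> g -> g) (form : g -> g -> F)
  (lie_g : is_lie_bracket br) (form_g : is_sym_inv_form br form) :
  exists act : H -> ghat g -> ghat g,
    (* act is an H-module structure on ghat (F-bilinear, unital, associative) *)
    [/\ (forall h1 h2 u, act (h1 + h2) u = act h1 u + act h2 u),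
        (forall (c : F) h u, act (c *: h) u = ghat_scale c (act h u)),
        (forall h u v, act h (u + v) = act h u + act h v),
        (forall (c : F) h u, act h (ghat_scale c u) = ghat_scale c (act h u)) &
        ((forall u, act 1 u = u) /\
        (forall h1 h2 u, act (h1 * h2) u = act h1 (act h2 u)))] /\
    (* the prescribed action on k and on a (x) t^n *)
    [/\ (forall r, act (Lm r) (kc g) = if r == 0%N then kc g else 0),
        (forall r, act (Lp r) (kc g) = if r == 0%N then kc g else 0) &
        (forall r, act (L0 r) (kc g) = if r == 0%N then kc g else 0)] /\
    [/\ (forall r (a : g) (n : int),
           act (Lm r) (tn a n) = tn (((-1) ^+ r * gbinom n r)%:~R *: a) (n - r%:Z)),
        (forall r (a : g) (n : int),
           act (Lp r) (tn a n) = tn ((gbinom (- n) r)%:~R *: a) (n + r%:Z)) &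
        (forall r (a : g) (n : int),
           act (L0 r) (tn a n) = tn ((gbinom (2%:Z * n) r)%:~R *: a) n)] /\
    (* module Lie algebra condition  b[u,v] = sum [b(1) u, b(2) v],
       on the PBW basis, with Delta(L^{(i)}_{-1} L^{(j)}_0 L^{(k)}_1)
       = sum L^{(i1)}_{-1} L^{(j1)}_0 L^{(k1)}_1 (x) L^{(i-i1)}_{-1} L^{(j-j1)}_0 L^{(k-k1)}_1 *)
    (forall (i j k : nat) (u v : ghat g),
       act (PBW Lm L0 Lp i j k) (ghat_br br form u v) =
       \sum_(i1 < i.+1) \sum_(j1 < j.+1) \sum_(k1 < k.+1)
          ghat_br br form (act (PBW Lm L0 Lp i1 j1 k1) u)
                          (act (PBW Lm L0 Lp (i - i1) (j - j1) (k - k1)) v)).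
Proof.
have eLm : forall r, Lm r = PBW Lm L0 Lp r 0 0.
  by move=> r; rewrite /PBW (hyp_L00 hypH) (hyp_Lp0 hypH) !mulr1.
have eL0 : forall r, L0 r = PBW Lm L0 Lp 0 r 0.
  by move=> r; rewrite /PBW (hyp_Lm0 hypH) (hyp_Lp0 hypH) mulr1 mul1r.
exists (@act F H Lm L0 Lp hypH g).
split; [|split; [|split]].
- split.
  + exact: act_add.
  + exact: act_scale.
  + exact: act_uD.
  + by move=> c h u; exact: act_uZ.
  + split; [exact: act1 | exact: act_mul].
- split => r.
  + by rewrite eLm act_PBW /TT Tp0 T00 /Tm Top_kc.
  + by rewrite (PBWp hypH) act_PBW /TT T00 Tm0 /Tp Top_kc.
  + by rewrite eL0 act_PBW /TT Tp0 Tm0 /T0 Top_kc.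
- split => r a n.
  + by rewrite eLm act_PBW /TT Tp0 T00 /Tm Top_tn.
  + by rewrite (PBWp hypH) act_PBW /TT T00 Tm0 /Tp Top_tn.
  + by rewrite eL0 act_PBW /TT Tp0 Tm0 /T0 Top_tn addr0.
- move=> i j k u v; rewrite act_PBW /TT.
  under eq_bigr => i1 _ do under eq_bigr => j1 _ do under eq_bigr => k1 _ do
    rewrite !act_PBW /TT.
  exact: leibPBW.
Qed.
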